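(* In the marked Hawkes model described in the context (with $\kappa<1$), if $X=f(A)\in\mathrm{MDA}(G)$, then the maximal claim size $H$ in one cluster also belongs to $\mathrm{MDA}(G)$.
   Context: $G$ is one of the three extreme value distributions, $\mathbb E=\{y:G(y)>0\}$; a real random variable $X$ belongs to $\mathrm{MDA}(G)$ if there exist $a_n>0,b_n\in\mathbb R$ with $n\,\mathbb P(X>a_nx+b_n)\to-\log G(x)$ for all $x\in\mathbb E$. Marked Hawkes model (cluster representation): $\mathbb S$ is a Polish space, $Q$ a probability on $\mathbb S$, $f:\mathbb S\to\mathbb R_+$ measurable, $\nu>0$, and $h:[0,\infty)\times\mathbb S\to\mathbb R_+$ measurable with $\kappa_a=\int_0^\infty h(s,a)\,ds$ and $\kappa=\mathbb E[\kappa_A]<1$, $A\sim Q$. The immigrants $(\Gamma_i,A_i)$ form a Poisson process on $[0,\infty)\times\mathbb S$ with mean measure $\nu\,ds\times Q$. Each immigrant generates a cluster: it contains the point $(\Gamma_i,A_i)$; recursively, given a point of the cluster at time $s$ with mark $a$, its direct offspring form (conditionally on all previous generations, independently over points) a Poisson process on $[s,\infty)\times\mathbb S$ with mean measure $h(u-s,a)\,du\times Q(db)$; the cluster consists of all points of all generations, and $K+1$ denotes its (a.s. finite) total number of points. All marks are i.i.d. with law $Q$. The maximal claim size in one cluster is $H=\max\{f(b):(u,b)\text{ a point of the cluster}\}$, and $X=f(A)$, $A\sim Q$. *)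

(* Defs.v *)
From HB Require Import structures.
From mathcomp Require Import all_boot all_order all_algebra.
From mathcomp Require Import all_classical all_reals all_analysis.
Set Implicit Arguments. Unset Strict Implicit. Unset Printing Implicit Defensive.
Import Order.TTheory GRing.Theory Num.Theory.
Import numFieldNormedType.Exports.
Local Open Scope classical_set_scope.
Local Open Scope ring_scope.

Section Defs.
Context {R : realType}.

Definition frechet (alpha : R) (x : R) : R :=
  if x <= 0 then 0 else expR (- (x `^ (- alpha))).
Definition weibull (alpha : R) (x : R) : R :=
  if x < 0 then expR (- ((- x) `^ alpha)) else 1.
Definition gumbel (x : R) : R := expR (- expR (- x)).

Definition is_EVD (G : R -> R) : Prop :=
  (exists2 alpha, 0 < alpha & G = frechet alpha) \/
  (exists2 alpha, 0 < alpha & G = weibull alpha) \/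
  G = gumbel.

Definition EVD_support (G : R -> R) : set R := [set y | 0 < G y].

Definition in_MDA {d} {T : measurableType d} (mu : probability T R)
  (X : T -> \bar R) (G : R -> R) : Prop :=
  exists a b : nat -> R, (forall n, 0 < a n) /\
    forall x, EVD_support G x ->
      (fun n : nat => n%:R * fine (mu [set w | ((a n * x + b n)%:E < X w)%E]))
        @ \oo --> - ln (G x).

Definition kappa {dS} {S : measurableType dS} (h : R * S -> R) (a : S) : \bar R :=
  (\int[lebesgue_measure]_(s in `[0%R, +oo[) (h (s, a))%:E)%E.

(* Ulam--Harris labels: [::] is the immigrant, (i :: v) is the i-th direct
   offspring of v.  Given offspring numbers N, [alive N w u] says that the
   label u belongs to the cluster. *)
Fixpoint alive {T : Type} (N : seq nat -> T -> nat) (w : T) (u : seq nat) : bool :=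
  if u is i :: v then alive N w v && (i < N v w)%N else true.

Definition mark_offspring_law {dS} {S : measurableType dS} (Q : probability S R)
  (h : R * S -> R) (B : set S) (k : nat) : \bar R :=
  (\int[Q]_(a in B)
     (expR (- fine (kappa h a)) * (fine (kappa h a)) ^+ k / (k`!)%:R)%:E)%E.

(* The family (M u, N u)_{u : seq nat} is i.i.d. with the above joint law:
   for every finite family of distinct labels the joint law on rectangles
   factorises (mutual independence + identical law). *)
Definition iid_cluster_family {d} {T : measurableType d} (P : probability T R)
  {dS} {S : measurableType dS} (Q : probability S R) (h : R * S -> R)
  (M : seq nat -> T -> S) (N : seq nat -> T -> nat) : Prop :=
  forall (us : seq (seq nat)) (B : seq nat -> set S) (k : seq nat -> nat),
    uniq us -> (forall u, measurable (B u)) ->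
    P (\bigcap_(u in [set u | u \in us]) [set w | B u (M u w) /\ N u w = k u])
    = (\prod_(u <- us) mark_offspring_law Q h (B u) (k u))%E.

Definition cluster_max {T : Type} {S : Type} (f : S -> R)
  (M : seq nat -> T -> S) (N : seq nat -> T -> nat) (w : T) : \bar R :=
  ereal_sup [set (f (M u w))%:E | u in [set u | alive N w u]].

End Defs.

(* Main.v *)
Require Import Defs.
From HB Require Import structures.
From mathcomp Require Import all_boot all_order all_algebra.
From mathcomp Require Import all_classical all_reals all_analysis.
From mathcomp Require Import measurable_realfun.
From mathcomp Require Import ring lra.
Import Order.TTheory GRing.Theory Num.Theory.
Import numFieldNormedType.Exports.
Local Open Scope classical_set_scope.
Local Open Scope ring_scope.
Section Poisson.
Context {R : realType}.
Local Open Scope ereal_scope.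

Lemma sum_pois (r : R) : (0 <= r)%R ->
  \sum_(k <oo) (expR (- r) * r ^+ k / k`!%:R)%:E = 1.
Proof.
move=> r0.
under eq_eseriesr do rewrite -mulrA EFinM.
rewrite nneseriesZl; last by move=> k _; rewrite lee_fin divr_ge0 // exprn_ge0.
rewrite [X in _ * X](_ : _ = (expR r)%:E).
  by rewrite -EFinM -expRD addNr expR0.
rewrite expRE -EFin_lim; last first.
  rewrite /pseries/=; under eq_fun do rewrite mulrC.
  exact: is_cvg_series_exp_coeff.
apply/congr_lim/funext => n/=; rewrite /pseries/= /series/= -sumEFin//.
by under eq_bigr do rewrite mulrC.
Qed.

Lemma helper_field (a b e r x : R) : (a != 0)%R -> (b != 0)%R ->
  (a * (e * (r * x) / (a * b)) = r * (e * x / b))%R.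
Proof. by move=> ha hb; field; rewrite ha hb. Qed.
Lemma natr_neq0 (n : nat) : (0 < n)%N -> (n%:R != 0 :> R)%R.
Proof. by rewrite pnatr_eq0 -lt0n. Qed.

Lemma mean_pois (r : R) : (0 <= r)%R ->
  \sum_(k <oo) (k%:R * (expR (- r) * r ^+ k / k`!%:R))%:E = r%:E.
Proof.
move=> r0.
have ge0 k : 0 <= (k%:R * (expR (- r) * r ^+ k / k`!%:R))%:E.
  by rewrite lee_fin mulr_ge0 // divr_ge0 // mulr_ge0 // ?expR_ge0 // exprn_ge0.
rewrite nneseries_recl //= mul0r add0e -nneseries_addn //.
under eq_eseriesr => k _.
  rewrite addn1 (_ : _ * _ = r * (expR (- r) * r ^+ k / k`!%:R))%R; last first.
    by rewrite factS natrM exprS helper_field // natr_neq0 // fact_gt0.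
  rewrite EFinM; over.
by rewrite nneseriesZl ?sum_pois ?mule1 // => k _; rewrite lee_fin divr_ge0 // mulr_ge0 // ?expR_ge0 // exprn_ge0.
Qed.

Lemma sum_indic_lt (k : nat) (c : R) : (0 <= c)%R ->
  \sum_(i <oo) ((if (i < k)%N then c else 0%R)%:E) = (k%:R * c)%:E.
Proof.
move=> c0; rewrite (nneseries_split 0 k); last first.
  by move=> i _; case: ifP.
rewrite add0n eseries0 ?adde0; last by move=> i ki _; rewrite ltnNge ki.
rewrite sumEFin big_mkord (eq_bigr (fun _ => c)) ?sumr_const ?card_ord ?mulr_natl //.
by move=> i _; rewrite ltn_ord.
Qed.

End Poisson.
Section Squeeze.
Context {R : realType}.

Lemma squeeze_main (q p : nat -> R) (s C : nat -> R) (c L : R) :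
  (forall n, 0 <= q n) ->
  (forall n, p n <= c * q n) ->
  (forall D n, s D * q n - C D * q n ^+ 2 <= p n) ->
  s @ \oo --> c ->
  (fun n => n%:R * q n) @ \oo --> L ->
  (fun n => n%:R * p n) @ \oo --> c * L.
Proof.
move=> q0 pup plo sc xL.
have q_to0 : q @ \oo --> 0.
  rewrite -cvg_shiftS /=.
  have -> : (fun n => q n.+1) = (fun n => ((n.+1)%:R * q n.+1) * harmonic n).
    by apply/funext => n; rewrite /harmonic /= mulrAC mulfV ?mul1r.
  have h1 : (fun n => n.+1%:R * q n.+1) @ \oo --> L by move: xL; rewrite -cvg_shiftS.
  by have := cvgM h1 (@cvg_harmonic R); rewrite mulr0; apply.
apply/cvgrPdist_le => eps eps0.
pose K := `|c| + 2 * (`|L| + 1).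
have K0 : 0 < K by rewrite /K ltr_wpDl // mulr_gt0 // ltr_wpDl.
pose del := Num.min 1 (eps / K).
have del0 : 0 < del by rewrite lt_min ltr01 divr_gt0.
have del1 : del <= 1 by rewrite ge_min lexx.
have delK : del * K <= eps.
  by rewrite -ler_pdivlMr // ge_min lexx orbT.
have [D0 _ HD0] := (cvgrPdist_le _ _).1 sc del del0.
have hD : `|c - s D0| <= del by apply: HD0 => /=.
set sd := s D0 in hD *; set Cd := C D0.
have Cq : (fun n => Cd * q n) @ \oo --> 0.
  by rewrite -(mulr0 Cd); apply: cvgMr.
have Cqn := (cvgrPdist_le _ _).1 Cq del del0.
have Lx := (cvgrPdist_le _ _).1 xL del del0.
near=> n.
have h1 : `|L - n%:R * q n| <= del by near: n; exact: Lx.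
have h2 : `|0 - Cd * q n| <= del by near: n; exact: Cqn.
rewrite sub0r normrN in h2.
set x := n%:R * q n in h1 *.
have up : n%:R * p n <= c * x.
  by rewrite /x mulrCA; apply: ler_wpM2l => //.
have lo : sd * x - (Cd * q n) * x <= n%:R * p n.
  have := ler_wpM2l (ler0n R n) (plo D0 n).
  move=> H; apply: le_trans H; rewrite le_eqVlt; apply/orP; left; apply/eqP.
  by rewrite /x /sd /Cd; ring.
have hx : `|x| <= `|L| + 1.
  have : `|x| <= `|x - L| + `|L| by rewrite -{1}(subrK L x) ler_normD.
  move=> H; apply: le_trans H _; rewrite addrC lerD2l distrC.
  exact: le_trans h1 del1.
have ha1 : `|c * x - c * L| <= `|c| * del.
  by rewrite -mulrBr normrM ler_wpM2l // distrC.
have ha2 : `|sd * x - c * x| <= del * (`|L| + 1).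
  by rewrite -mulrBl normrM ler_pM // distrC.
have ha3 : `|Cd * q n * x| <= del * (`|L| + 1).
  by rewrite normrM ler_pM.
have hK : del * K = `|c| * del + 2 * (del * (`|L| + 1)) by rewrite /K; ring.
move: ha1 ha2 ha3; rewrite !ler_norml => /andP[a1 a1'] /andP[a2 a2'] /andP[a3 a3'].
apply/andP; split; lra.
Unshelve. all: end_near.
Qed.

End Squeeze.
Section EVD.
Context {R : realType}.

Lemma evd_scale (G : R -> R) (c : R) : is_EVD G -> 0 < c ->
  exists al be, 0 < al /\ forall x, EVD_support G x ->
    EVD_support G (al * x + be) /\ c * (- ln (G (al * x + be))) = - ln (G x).
Proof.
move=> [[a0 a0p ->]|[[a0 a0p ->]|->]] c0.
- exists (c `^ (a0^-1)), 0; split; first by rewrite powR_gt0.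
  move=> x; rewrite /EVD_support /frechet /=.
  case: ifPn => [_|]; first by rewrite ltxx.
  rewrite -ltNge => x0 _.
  have y0 : 0 < c `^ (a0^-1) * x + 0 by rewrite addr0 mulr_gt0 // powR_gt0.
  rewrite leNgt y0 /=; split; first exact: expR_gt0.
  rewrite !expRK !opprK addr0 powRM ?ltW ?powR_gt0 //.
  rewrite -powRrM mulrN mulVf ?gt_eqF // powR_inv1 ?ltW //.
  by rewrite mulrA mulfV ?gt_eqF // mul1r.
- exists (c `^ (- a0^-1)), 0; split; first by rewrite powR_gt0.
  move=> x; rewrite /EVD_support /weibull /= addr0 => _.
  have al0 : 0 < c `^ (- a0^-1) by rewrite powR_gt0.
  case: (ltP x 0) => x0.
    have y0 : c `^ (- a0^-1) * x < 0 by rewrite pmulr_rlt0.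
    rewrite y0; split; first exact: expR_gt0.
    rewrite !expRK !opprK -mulrN powRM ?ltW ?oppr_gt0 //.
    rewrite -powRrM mulNr mulVf ?gt_eqF // powR_inv1 ?ltW //.
    by rewrite mulrA mulfV ?gt_eqF // mul1r.
  have y0 : ~~ (c `^ (- a0^-1) * x < 0) by rewrite -leNgt mulr_ge0 // ltW.
  by rewrite (negbTE y0) ln1 oppr0 mulr0 ltr01.
- exists 1, (ln c); split => //.
  move=> x _; rewrite /EVD_support /gumbel; split; first exact: expR_gt0.
  rewrite !expRK !opprK mul1r opprD expRD.
  by rewrite (expRN (ln c)) lnK ?posrE // mulrCA mulfV ?gt_eqF // mulr1.
Qed.

End EVD.
Section Cluster.
Context {R : realType} {dS : measure_display} {S : measurableType dS} (Q : probability S R)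
  (h : R * S -> R) {d : measure_display} {T : measurableType d} (P : probability T R)
  (M : seq nat -> T -> S) (N : seq nat -> T -> nat).
Hypothesis mM : forall u, measurable_fun setT (M u).
Hypothesis mN : forall u k, measurable [set w | N u w = k].
Hypothesis iid : iid_cluster_family P Q h M N.

Local Open Scope ereal_scope.

Definition law (B : set S) (k : nat) : \bar R := mark_offspring_law Q h B k.
Definition nu (B : set S) (K : set nat) : \bar R := \sum_(k <oo | k \in K) law B k.

Fixpoint evK (us : seq (seq nat)) (B : seq nat -> set S) (K : seq nat -> set nat) : set T :=
  if us is u :: us' then [set w | B u (M u w) /\ K u (N u w)] `&` evK us' B K else setT.
Fixpoint evk (us : seq (seq nat)) (B : seq nat -> set S) (k : seq nat -> nat) : set T :=
  if us is u :: us' then [set w | B u (M u w) /\ N u w = k u] `&` evk us' B k else setT.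

Lemma measurable_evK us B K : (forall u, measurable (B u)) -> measurable (evK us B K).
Proof.
move=> mB; elim: us => [|u us IH] /=; first exact: measurableT.
apply: measurableI => //.
rewrite (_ : [set w | _] = (M u @^-1` B u) `&` \bigcup_(k in K u) [set w | N u w = k]).
  apply: measurableI.
    by rewrite -[_ @^-1` _]setTI; apply: mM.
  by apply: bigcup_measurable => k _; exact: mN.
apply/seteqP; split => w /=.
  by move=> [Bw Kw]; split => //; exists (N u w).
by move=> [Bw [k Kk ->]].
Qed.

Lemma measurable_evk us B k : (forall u, measurable (B u)) -> measurable (evk us B k).
Proof.
move=> mB; elim: us => [|u us IH] /=; first exact: measurableT.
apply: measurableI => //.
rewrite (_ : [set w | _] = (M u @^-1` B u) `&` [set w | N u w = k u]).
  apply: measurableI; last exact: mN.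
  by rewrite -[_ @^-1` _]setTI; apply: mM.
by apply/seteqP; split => w /=.
Qed.

Lemma evk_bigcap us B k : evk us B k =
  \bigcap_(u in [set u | u \in us]) [set w | B u (M u w) /\ N u w = k u].
Proof.
elim: us => [|u us IH] /=.
  by apply/seteqP; split => w //= _ v; rewrite in_nil.
rewrite IH (_ : [set v | v \in u :: us] = u |` [set v | v \in us]).
  by rewrite bigcap_setU1.
apply/seteqP; split => v /=; rewrite in_cons.
  by move=> /orP[/eqP ->|]; [left|right].
by move=> [->|->]; rewrite ?eqxx ?orbT.
Qed.

Lemma P_evk us B k : uniq us -> (forall u, measurable (B u)) ->
  P (evk us B k) = \prod_(u <- us) law (B u) (k u).
Proof. by move=> Hu mB; rewrite evk_bigcap; apply: iid. Qed.

Lemma evK_eq us B K K' : (forall u, u \in us -> K u = K' u) -> evK us B K = evK us B K'.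
Proof.
elim: us => [|u us IH] //= HK; rewrite (HK u) ?mem_head // IH //.
by move=> v vin; apply: HK; rewrite in_cons vin orbT.
Qed.

Lemma evk_eq us B k k' : (forall u, u \in us -> k u = k' u) -> evk us B k = evk us B k'.
Proof.
elim: us => [|u us IH] //= HK; rewrite (HK u) ?mem_head // IH //.
by move=> v vin; apply: HK; rewrite in_cons vin orbT.
Qed.

Lemma lawP B j : measurable B ->
  law B j = P (evk [:: [::]] (fun _ => B) (fun _ => j)).
Proof. by move=> mB; rewrite P_evk // big_seq1. Qed.

Lemma law_ge0 B j : measurable B -> 0 <= law B j.
Proof. by move=> mB; rewrite lawP. Qed.

Lemma ev_prod us1 : forall us2 B K k, uniq (us1 ++ us2) -> (forall u, measurable (B u)) ->
  P (evK us1 B K `&` evk us2 B k) =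
  (\prod_(u <- us1) nu (B u) (K u)) * \prod_(u <- us2) law (B u) (k u).
Proof.
elim: us1 => [|a r IH] us2 B K k Hu mB /=.
  by rewrite setTI big_nil mul1e P_evk.
have Hu' : uniq (r ++ us2) by move: Hu; rewrite cat_cons => /andP[].
have aN : a \notin r ++ us2 by move: Hu; rewrite cat_cons => /andP[].
have aN2 : a \notin us2 by move: aN; rewrite mem_cat negb_or => /andP[].
have Hu2 : uniq (r ++ a :: us2).
  have := perm_catCA r [:: a] us2 => /permPl/perm_uniq ->.
  by rewrite /= aN Hu'.
pose kj j := fun u => if u == a then j else k u.
have Ekj j : evk us2 B (kj j) = evk us2 B k.
  apply: evk_eq => u uin; rewrite /kj; case: eqP => // ua.
  by move: uin; rewrite ua (negbTE aN2).
have Pkj j : \prod_(u <- us2) law (B u) (kj j u) = \prod_(u <- us2) law (B u) (k u).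
  apply: eq_big_seq => u uin; rewrite /kj; case: eqP => // ua.
  by move: uin; rewrite ua (negbTE aN2).
have setE : [set w | B a (M a w) /\ K a (N a w)] `&` evK r B K `&` evk us2 B k =
    \bigcup_(j in K a) (evK r B K `&` evk (a :: us2) B (kj j)).
  apply/seteqP; split => w /=.
    move=> [[[Ba Ka] Er] Ek]; exists (N a w) => //.
    by rewrite Ekj /kj eqxx.
  move=> [j Kj [Er [[Ba Na] Ek]]]; rewrite Ekj in Ek; rewrite /kj eqxx in Na.
  by rewrite Na.
rewrite setE measure_bigcup //; last first.
- move=> i j _ _ [w [[_ [[_ Ni] _]] [_ [[_ Nj] _]]]].
  by rewrite /kj eqxx in Ni Nj; rewrite -Ni -Nj.
- by move=> j _; apply: measurableI; [exact: measurable_evK|exact: measurable_evk].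
have c0 := IH [::] B K k; rewrite cats0 in c0; move: (c0 (subseq_uniq (prefix_subseq r us2) Hu') mB) => {c0}.
rewrite /= setIT big_nil mule1 => c0.
have d0 := @P_evk us2 B k (subseq_uniq (suffix_subseq r us2) Hu') mB.
set c := \prod_(u <- r) _ in c0 *; set dd := \prod_(u <- us2) _ in d0 *.
have cfin : c \is a fin_num.
  by rewrite -c0 fin_num_measure //; apply: measurable_evK.
have dfin : dd \is a fin_num.
  by rewrite -d0 fin_num_measure //; apply: measurable_evk.
rewrite (eq_eseriesr (g := fun j => (fine c * fine dd)%:E * law (B a) j)); last first.
  move=> j _; have := IH (a :: us2) B K (kj j) Hu2 mB; rewrite /= => ->.
  rewrite big_cons /kj eqxx Pkj -/c -/dd.
  by rewrite EFinM !fineK // muleCA muleC.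
rewrite nneseriesZl; last by move=> j _; exact: law_ge0.
rewrite big_cons -/c EFinM !fineK // -/(nu (B a) (K a)).
by rewrite muleC muleA.
Qed.

Hypothesis mh : measurable_fun setT h.
Hypothesis h0 : forall p, (0 <= h p)%R.

Definition lam (a : S) : R := fine (kappa h a).
Definition phi (k : nat) (a : S) : R := (expR (- lam a) * lam a ^+ k / k`!%:R)%R.

Lemma kappa_ge0 a : 0 <= kappa h a.
Proof. by apply: integral_ge0 => s _; rewrite lee_fin. Qed.

Lemma lam_ge0 a : (0 <= lam a)%R.
Proof. exact/fine_ge0/kappa_ge0. Qed.

Lemma phi_ge0 k a : (0 <= phi k a)%R.
Proof. by rewrite /phi divr_ge0 // mulr_ge0 ?expR_ge0 // exprn_ge0 // lam_ge0. Qed.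

Lemma measurable_kappa : measurable_fun setT (kappa h).
Proof.
pose D := `[0%R, +oo[%classic : set R.
pose g := fun p : R * S => ((h p) * \1_D p.1)%:E.
have -> : kappa h = fubini_G (@lebesgue_measure R) g.
  apply/funext => a; rewrite /kappa /fubini_G [LHS]integral_mkcond; apply: eq_integral => s _.
  rewrite /g patchE indicE /=; case: ifPn => _; by rewrite ?mulr1 ?mulr0.
apply: measurable_fun_fubini_tonelli_G.
  have mg : measurable_fun setT (fun p : R * S => (h p * \1_D p.1)%R).
    apply: (@measurable_funM _ _ _ setT h (fun p : R * S => (\1_D p.1 : R))) => //.
    apply: measurableT_comp; last exact: measurable_fst.
    by apply: measurable_indic; rewrite /D; exact: measurable_itv.
  exact: (proj2 (measurable_EFinP _ _) mg).
by move=> p; rewrite lee_fin mulr_ge0 // indicE ler0n.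
Qed.

Lemma measurable_lam : measurable_fun setT lam.
Proof. exact: (measurableT_comp (fine_measurable measurableT) measurable_kappa). Qed.

Lemma measurable_phi k : measurable_fun setT (phi k).
Proof.
apply: (@measurable_funM _ _ _ setT (fun a => expR (- lam a) * lam a ^+ k)%R
  (fun _ => (k`!%:R)^-1%R)); last exact: measurable_cst.
apply: (@measurable_funM _ _ _ setT (fun a => expR (- lam a))%R (fun a => lam a ^+ k)%R);
  last exact: (measurable_funX k measurable_lam).
apply: measurableT_comp; first exact: measurable_expR.
exact: (measurable_funN measurable_lam).
Qed.

Lemma nu_setT B : measurable B -> nu B setT = Q B.
Proof.
move=> mB; rewrite /nu (eq_eseriesl _ (Q := xpredT)); last by move=> k; rewrite in_setT.
rewrite (eq_eseriesr (g := fun k => \int[Q]_(a in B) (phi k a)%:E)) //.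
rewrite -integral_nneseries //; first last.
- by move=> k a _; rewrite lee_fin phi_ge0.
- by move=> k; apply/measurable_EFinP; apply: measurable_funTS; exact: measurable_phi.
rewrite (eq_integral (cst 1)); first by rewrite integral_cst // mul1e.
by move=> a _; rewrite /phi sum_pois // lam_ge0.
Qed.

Definition pbar (i : nat) : \bar R := nu setT [set k | (i < k)%N].

Lemma pbarE i : pbar i =
  \int[Q]_a (\sum_(k <oo) ((if (i < k)%N then phi k a else 0%R)%:E)).
Proof.
rewrite integral_nneseries //; first last.
- by move=> k a _; case: ifP => _; rewrite lee_fin ?phi_ge0.
- move=> k; case: (i < k)%N; last exact: measurable_cst.
  by apply/measurable_EFinP; exact: measurable_phi.
rewrite /pbar /nu eseries_mkcond; apply: eq_eseriesr => k _.
rewrite (_ : (k \in _) = (i < k)%N); last by apply/idP/idP; rewrite inE.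
by case: (i < k)%N => //; rewrite integral0.
Qed.

Lemma sum_pbar : \sum_(i <oo) pbar i = \int[Q]_a (lam a)%:E.
Proof.
rewrite (eq_eseriesr (fun i _ => pbarE i)) -integral_nneseries //; first last.
- by move=> i a _; apply: nneseries_ge0 => k _ _; case: ifP => _; rewrite lee_fin ?phi_ge0.
- move=> i; apply: (@ge0_emeasurable_sum _ _ _ _
     (fun k a => ((if (i < k)%N then phi k a else 0%R)%:E)) xpredT).
    by move=> k a _ _; case: ifP => _; rewrite lee_fin ?phi_ge0.
  move=> k _; case: (i < k)%N; last exact: measurable_cst.
  by apply/measurable_EFinP; exact: measurable_phi.
apply: eq_integral => a _.
rewrite (nneseries_interchange xpredT xpredT); last first.
  by move=> i k; case: ifP => _; rewrite lee_fin ?phi_ge0.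
rewrite (eq_eseriesr (g := fun k => (k%:R * phi k a)%:E)); last first.
  by move=> k _; rewrite sum_indic_lt // phi_ge0.
by rewrite /phi mean_pois // lam_ge0.
Qed.

Lemma sum_pbar_lt1 : (\int[Q]_a kappa h a < 1) -> \sum_(i <oo) pbar i < 1.
Proof.
move=> k1; rewrite sum_pbar; apply: le_lt_trans k1.
apply: ge0_le_integral => //.
- by move=> a _; rewrite lee_fin lam_ge0.
- by apply/measurable_EFinP; exact: measurable_lam.
- exact: measurable_kappa.
move=> a _; rewrite /lam; have := kappa_ge0 a.
by case: (kappa h a) => [r| |] //=; rewrite lee_fin.
Qed.

Fixpoint anc (u : seq nat) : seq (seq nat) :=
  if u is i :: v then v :: anc v else [::].

Definition KA (u : seq nat) (w : seq nat) : set nat :=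
  [set k | (nth 0%N u (size u - (size w).+1) < k)%N].

Lemma anc_size u w : w \in anc u -> (size w < size u)%N.
Proof.
elim: u => [|i v IH] //=; rewrite in_cons => /orP[/eqP -> //|/IH].
by move=> /ltn_trans; apply.
Qed.

Lemma anc_uniq u : uniq (anc u).
Proof.
elim: u => [|i v IH] //=; rewrite IH andbT; apply/negP => /anc_size.
by rewrite ltnn.
Qed.

Lemma notin_anc u : u \notin anc u.
Proof. by apply/negP => /anc_size; rewrite ltnn. Qed.

Lemma evK_eqB us B B' K : (forall u, u \in us -> B u = B' u) -> evK us B K = evK us B' K.
Proof.
elim: us => [|u us IH] //= HB; rewrite (HB u) ?mem_head // IH //.
by move=> v vin; apply: HB; rewrite in_cons vin orbT.
Qed.

Lemma KA_cons i v w : w \in anc v -> KA (i :: v) w = KA v w.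
Proof.
move=> /anc_size wv; rewrite /KA /= subSn //.
Qed.

Lemma alive_evK u w : alive N w u <-> evK (anc u) (fun _ => setT) (KA u) w.
Proof.
elim: u => [|i v IH] //=.
rewrite (@evK_eq (anc v) (fun _ => setT) (KA (i :: v)) (KA v)); last by move=> x /KA_cons.
rewrite /KA /= subnn /=.
split; first by move=> /andP[/IH av iN].
by move=> [[_ iN] /IH av]; apply/andP.
Qed.

Definition evA (u : seq nat) (B : set S) : set T := [set w | alive N w u /\ B (M u w)].

Lemma evAE u B : evA u B = evK (u :: anc u) (fun w => if w == u then B else setT)
  (fun w => if w == u then setT else KA u w).
Proof.
rewrite /= eqxx (@evK_eqB (anc u) _ (fun _ => setT)); last first.
  by move=> w win; case: eqP => // wu; move: win; rewrite wu (negbTE (notin_anc u)).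
rewrite (@evK_eq (anc u) _ _ (KA u)); last first.
  by move=> w win; case: eqP => // wu; move: win; rewrite wu (negbTE (notin_anc u)).
apply/seteqP; split => w /=.
  by move=> [/alive_evK av Bw].
by move=> [[Bw _] /alive_evK av].
Qed.

Definition pb (u : seq nat) : \bar R := \prod_(i <- u) pbar i.

Lemma prod_anc u : \prod_(w <- anc u) nu setT (KA u w) = pb u.
Proof.
elim: u => [|i v IH]; first by rewrite /pb !big_nil.
rewrite /= /pb !big_cons -/(pb v) -IH; congr (_ * _).
  by rewrite /KA /= subnn.
by apply: eq_big_seq => w /KA_cons ->.
Qed.

Lemma measurable_evA u B : measurable B -> measurable (evA u B).
Proof.
move=> mB; rewrite evAE; apply: measurable_evK => w; case: eqP => //.
Qed.

Lemma PA u B : measurable B -> P (evA u B) = Q B * pb u.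
Proof.
move=> mB; rewrite evAE -[X in P X]setIT.
have := @ev_prod (u :: anc u) [::] (fun w => if w == u then B else setT)
  (fun w => if w == u then setT else KA u w) (fun _ => 0%N).
rewrite cats0 /= notin_anc anc_uniq => ->; last by move=> w; case: eqP.
rewrite big_nil mule1 big_cons eqxx nu_setT //.
congr (_ * _); rewrite -prod_anc; apply: eq_big_seq => w win.
by case: eqP => // wu; move: win; rewrite wu (negbTE (notin_anc u)).
by [].
Qed.

Lemma PAA u v B : u != v -> measurable B -> P (evA u B `&` evA v B) <= Q B * Q B.
Proof.
move=> uv mB.
have E := @ev_prod [:: u; v] [::] (fun _ => B) (fun _ => setT) (fun _ => 0%N).
have Hu : uniq ([:: u; v] ++ [::]) by rewrite /= inE uv.
move: (E Hu (fun _ => mB)) => {E}.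
rewrite setIT big_nil mule1 !big_cons big_nil mule1 !nu_setT // => <-.
apply: le_measure; rewrite ?inE.
- by apply: measurableI; exact: measurable_evA.
- by apply: measurable_evK.
by move=> w [[_ Bu] [_ Bv]].
Qed.

Lemma nu_P B K : measurable B -> nu B K = P (evK [:: [::]] (fun _ => B) (fun _ => K)).
Proof.
move=> mB; have := @ev_prod [:: [::]] [::] (fun _ => B) (fun _ => K) (fun _ => 0%N) isT (fun _ => mB).
by rewrite setIT big_nil mule1 big_seq1 => ->.
Qed.

Lemma pbar_fin i : pbar i \is a fin_num.
Proof. by rewrite /pbar nu_P // fin_num_measure //; apply: measurable_evK. Qed.

Lemma pbar_ge0 i : 0 <= pbar i.
Proof. by rewrite /pbar nu_P. Qed.

Definition mR : R := fine (\sum_(i <oo) pbar i).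

Hypothesis kappa_lt1 : \int[Q]_a kappa h a < 1.

Lemma sum_pbar_fin : \sum_(i <oo) pbar i = mR%:E.
Proof.
rewrite /mR fineK // ge0_fin_numE; first exact: lt_trans (sum_pbar_lt1 kappa_lt1) (ltry _).
by apply: nneseries_ge0 => i _ _; exact: pbar_ge0.
Qed.

Lemma mR_ge0 : (0 <= mR)%R.
Proof. by apply: fine_ge0; apply: nneseries_ge0 => i _ _; exact: pbar_ge0. Qed.

Lemma mR_lt1 : (mR < 1)%R.
Proof. by have := sum_pbar_lt1 kappa_lt1; rewrite sum_pbar_fin lte_fin. Qed.

Fixpoint Ugen (n : nat) (E : seq nat -> set T) : set T :=
  if n is n'.+1 then \bigcup_i Ugen n' (fun v => E (i :: v)) else E [::].
Fixpoint gsum (n : nat) (g : seq nat -> \bar R) : \bar R :=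
  if n is n'.+1 then \sum_(i <oo) gsum n' (fun v => g (i :: v)) else g [::].

Lemma measurable_Ugen n E : (forall u, measurable (E u)) -> measurable (Ugen n E).
Proof.
elim: n E => [|n IH] E mE /=; first exact: mE.
by apply: bigcup_measurable => i _; apply: IH => u; exact: mE.
Qed.

Lemma gsum_ge0 n g : (forall u, 0 <= g u) -> 0 <= gsum n g.
Proof.
elim: n g => [|n IH] g g0 //=; apply: nneseries_ge0 => i _ _; exact: IH.
Qed.

Lemma P_Ugen n E : (forall u, measurable (E u)) -> P (Ugen n E) <= gsum n (fun u => P (E u)).
Proof.
elim: n E => [|n IH] E mE //=.
have mF i : measurable (Ugen n (fun v => E (i :: v))).
  by apply: measurable_Ugen => u; exact: mE.
apply: le_trans (measure_sigma_subadditive P mF _ (@subset_refl _ _)) _.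
  by apply: bigcup_measurable => i _.
apply: lee_nneseries => [i _ _|i _]; first exact: measure_ge0.
by apply: IH => u; exact: mE.
Qed.

Lemma gsum_pb n (c : R) : (0 <= c)%R ->
  gsum n (fun u => c%:E * pb u) = (c * mR ^+ n)%:E.
Proof.
elim: n c => [|n IH] c c0 /=; first by rewrite /pb big_nil mule1 expr0 mulr1.
rewrite (eq_eseriesr (g := fun i => (c * mR ^+ n)%:E * pbar i)); last first.
  move=> i _; rewrite (_ : (fun v => _) = (fun v => (c * fine (pbar i))%:E * pb v)).
    rewrite IH ?mulr_ge0 ?fine_ge0 ?pbar_ge0 //.
    by rewrite -[in RHS](fineK (pbar_fin i)) -EFinM; congr EFin; rewrite mulrAC.
  apply/funext => v; rewrite /pb big_cons EFinM fineK ?pbar_fin //.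
  by rewrite muleA.
rewrite nneseriesZl; last by move=> i _; exact: pbar_ge0.
by rewrite sum_pbar_fin -EFinM; congr EFin; rewrite exprS; ring.
Qed.

Lemma Ugen_in u E w : E u w -> Ugen (size u) E w.
Proof.
elim: u E => [|i v IH] E Euw //=.
by exists i => //; apply: (IH (fun v' => E (i :: v'))).
Qed.

Lemma Ugen_ex n E w : Ugen n E w -> exists u, E u w.
Proof.
elim: n E => [|n IH] E /=; first by exists [::].
by move=> [i _ /IH [v Ev]]; exists (i :: v).
Qed.

Variable f : S -> R.
Hypothesis mf : measurable_fun setT f.

Definition Bt (t : R) : set S := [set a | (t%:E < (f a)%:E)].

Lemma measurable_Bt t : measurable (Bt t).
Proof.
have := mf measurableT _ (measurable_itv `]t, +oo[); rewrite setTI.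
congr measurable; apply/seteqP; split => a; rewrite /Bt /= in_itv /= andbT lte_fin //.
Qed.

Definition Hset (t : R) : set T := [set w | (t%:E < cluster_max f M N w)].

Lemma Hset_eq t : Hset t = \bigcup_n Ugen n (fun u => evA u (Bt t)).
Proof.
apply/seteqP; split => w /=.
  move=> /ereal_sup_gt [y [u /= au <-] ty].
  by exists (size u) => //; apply: (@Ugen_in u (fun u => evA u (Bt t))).
move=> [n _ /Ugen_ex [u [au tu]]].
apply: lt_le_trans tu _; apply: ereal_sup_ubound; by exists u.
Qed.

Lemma measurable_Hset t : measurable (Hset t).
Proof.
rewrite Hset_eq; apply: bigcup_measurable => n _; apply: measurable_Ugen => u.
exact/measurable_evA/measurable_Bt.
Qed.

Lemma upper t : P (Hset t) <= \sum_(n <oo) ((fine (Q (Bt t)) * mR ^+ n)%:E).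
Proof.
rewrite Hset_eq.
have mF n : measurable (Ugen n (fun u => evA u (Bt t))).
  by apply: measurable_Ugen => u; exact/measurable_evA/measurable_Bt.
apply: le_trans (measure_sigma_subadditive P mF _ (@subset_refl _ _)) _.
  by apply: bigcup_measurable => n _.
apply: lee_nneseries => [n _ _|n _]; first exact: measure_ge0.
have mE u : measurable (evA u (Bt t)) by exact/measurable_evA/measurable_Bt.
apply: le_trans (P_Ugen n _ mE) _.
rewrite -gsum_pb ?fine_ge0 //.
rewrite (_ : (fun u => P (evA u (Bt t))) = (fun u => (fine (Q (Bt t)))%:E * pb u)) //.
apply/funext => u; rewrite PA; last exact: measurable_Bt.
by rewrite fineK // fin_num_measure //; exact: measurable_Bt.
Qed.

Definition pr (X : set T) : R := fine (P X).

Lemma pr_ge0 X : (0 <= pr X)%R.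
Proof. exact/fine_ge0/measure_ge0. Qed.

Lemma Pfin X : measurable X -> P X \is a fin_num.
Proof. by move=> mX; rewrite fin_num_measure. Qed.

Lemma pr_le X Y : measurable X -> measurable Y -> X `<=` Y -> (pr X <= pr Y)%R.
Proof.
move=> mX mY XY; rewrite /pr fine_le ?Pfin //.
by apply: le_measure; rewrite ?inE.
Qed.

Lemma prU X Y : measurable X -> measurable Y ->
  pr (X `|` Y) = (pr X + pr Y - pr (X `&` Y))%R.
Proof.
move=> mX mY; rewrite /pr measureUfinl //; last first.
  by rewrite ltey; move: (Pfin _ mX); rewrite fin_numE => /andP[].
rewrite fineB ?fineD ?fin_numD ?Pfin //; exact: measurableI.
Qed.

Lemma prU_le X Y : measurable X -> measurable Y -> (pr (X `|` Y) <= pr X + pr Y)%R.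
Proof. by move=> mX mY; rewrite prU // lerBlDr lerDl pr_ge0. Qed.

Fixpoint Uls (us : seq (seq nat)) (A : seq nat -> set T) : set T :=
  if us is u :: us' then A u `|` Uls us' A else set0.

Lemma measurable_Uls us A : (forall u, measurable (A u)) -> measurable (Uls us A).
Proof. by move=> mA; elim: us => [|u us IH] //=; apply: measurableU. Qed.

Lemma pr_inter_Uls X us A : measurable X -> (forall u, measurable (A u)) ->
  (pr (X `&` Uls us A) <= \sum_(v <- us) pr (X `&` A v))%R.
Proof.
move=> mX mA; elim: us => [|v us IH] /=; first by rewrite setI0 big_nil /pr measure0.
have m1 : measurable (X `&` A v) by exact: measurableI.
have m2 : measurable (X `&` Uls us A) by apply: measurableI => //; exact: measurable_Uls.
rewrite setIUr big_cons; apply: le_trans (prU_le _ _ m1 m2) _.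
by rewrite lerD2l.
Qed.

Lemma sum_le_const (us : seq (seq nat)) (g : seq nat -> R) e :
  (forall v, v \in us -> g v <= e)%R -> (\sum_(v <- us) g v <= (size us)%:R * e)%R.
Proof.
elim: us => [|v us IH] H; first by rewrite big_nil mul0r.
rewrite big_cons /= -addn1 natrD mulrDl mul1r addrC lerD //.
  by apply: IH => w win; apply: H; rewrite in_cons win orbT.
by apply: H; rewrite mem_head.
Qed.

Lemma bonf us A e : uniq us -> (forall u, measurable (A u)) ->
  (forall u v, u != v -> pr (A u `&` A v) <= e)%R -> (0 <= e)%R ->
  (\sum_(u <- us) pr (A u) - (size us)%:R ^+ 2 * e <= pr (Uls us A))%R.
Proof.
move=> + mA He e0; elim: us => [|u us IH] /=.
  by move=> _; rewrite big_nil expr0n /= mul0r subr0 /pr measure0.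
move=> /andP[uN Hu]; rewrite big_cons prU //; last exact: measurable_Uls.
have h1 := IH Hu.
have h2 : (pr (A u `&` Uls us A) <= (size us)%:R * e)%R.
  apply: le_trans (pr_inter_Uls _ _ _ (mA u) mA) _.
  apply: sum_le_const => v vin; apply: He.
  by apply/eqP => uv; move: uN; rewrite uv vin.
have h3 : (0 <= (size us)%:R :> R)%R by [].
rewrite (_ : (size us).+1%:R = (size us)%:R + 1 :> R)%R; last by rewrite -addn1 natrD.
set NN := (size us)%:R in h1 h2 h3 *.
set S1 := (\sum_(j <- us) pr (A j))%R in h1 *.
have h4 : (0 <= NN * e)%R by rewrite mulr_ge0.
have -> : ((NN + 1) ^+ 2 * e = NN ^+ 2 * e + NN * e + (NN * e + e))%R by ring.
have h5 : (0 <= NN * e + e)%R by rewrite addr_ge0.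
lra.
Qed.

Fixpoint lab (D n : nat) : seq (seq nat) :=
  if n is n'.+1 then [seq i :: v | i <- iota 0 D, v <- lab D n'] else [:: [::]].
Fixpoint labs (D n : nat) : seq (seq nat) :=
  if n is n'.+1 then labs D n' ++ lab D n' else [::].

Lemma lab_size D n u : u \in lab D n -> size u = n.
Proof.
elim: n u => [|n IH] u /=; first by rewrite inE => /eqP ->.
by move=> /allpairsPdep [i [v [_ vin ->]]] /=; rewrite IH.
Qed.

Lemma lab_uniq D n : uniq (lab D n).
Proof.
elim: n => [|n IH] //=; apply: allpairs_uniq => //; first exact: iota_uniq.
by move=> [i v] [j w] _ _ /= [-> ->].
Qed.

Lemma labs_size D n u : u \in labs D n -> (size u < n)%N.
Proof.
elim: n u => [|n IH] u //=; rewrite mem_cat => /orP[/IH|/lab_size ->] //.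
by move=> /ltn_trans; apply.
Qed.

Lemma labs_uniq D n : uniq (labs D n).
Proof.
elim: n => [|n IH] //=; rewrite cat_uniq IH lab_uniq andbT /=.
apply/hasPn => u /lab_size su; apply/negP => /labs_size.
by rewrite su ltnn.
Qed.

Definition pbR (u : seq nat) : R := \prod_(i <- u) fine (pbar i).

Lemma pbE u : pb u = (pbR u)%:E.
Proof.
elim: u => [|i v IH]; first by rewrite /pb /pbR !big_nil.
by rewrite /pb /pbR !big_cons -/(pb v) -/(pbR v) IH EFinM fineK ?pbar_fin.
Qed.

Definition mD (D : nat) : R := \sum_(i <- iota 0 D) fine (pbar i).

Lemma sum_lab D n : (\sum_(u <- lab D n) pbR u = mD D ^+ n)%R.
Proof.
elim: n => [|n IH] /=; first by rewrite big_seq1 /pbR big_nil expr0.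
rewrite big_allpairs_dep exprS -IH /mD mulr_suml; apply: eq_bigr => i _.
by rewrite mulr_sumr; apply: eq_bigr => v _; rewrite /pbR big_cons.
Qed.

Lemma sum_labs D n : (\sum_(u <- labs D n) pbR u = \sum_(k < n) mD D ^+ k)%R.
Proof.
elim: n => [|n IH] /=; first by rewrite !big_nil big_ord0.
by rewrite big_cat IH sum_lab big_ord_recr.
Qed.

Lemma Uls_sub t us : Uls us (fun u => evA u (Bt t)) `<=` Hset t.
Proof.
elim: us => [|u us IH] //= w [Aw|/IH //].
rewrite Hset_eq; exists (size u) => //.
exact: (@Ugen_in u (fun u => evA u (Bt t))).
Qed.

Lemma lower t D :
  (fine (Q (Bt t)) * (\sum_(k < D) mD D ^+ k) -
   (size (labs D D))%:R ^+ 2 * fine (Q (Bt t)) ^+ 2 <= pr (Hset t))%R.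
Proof.
set q := fine (Q (Bt t)).
have mA u : measurable (evA u (Bt t)) by exact/measurable_evA/measurable_Bt.
apply: le_trans _ (pr_le _ _ (measurable_Uls (labs D D) _ mA) (measurable_Hset t) (Uls_sub t _)).
have q0 : (0 <= q)%R by exact/fine_ge0/measure_ge0.
have Qfin : Q (Bt t) \is a fin_num by rewrite fin_num_measure //; exact: measurable_Bt.
have He : forall u v, u != v -> (pr (evA u (Bt t) `&` evA v (Bt t)) <= q ^+ 2)%R.
  move=> u v uv; rewrite /pr.
  have := PAA _ _ _ uv (measurable_Bt t); rewrite -(fineK Qfin) -EFinM => H.
  rewrite expr2 -[X in (_ <= X)%R]/(fine ((q * q)%R)%:E) fine_le ?Pfin //.
  exact: measurableI.
have key := @bonf (labs D D) (fun u => evA u (Bt t)) (q ^+ 2)%R (labs_uniq D D) mA He (exprn_ge0 2 q0).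
apply: le_trans key; rewrite lerD2r -sum_labs mulr_sumr le_eqVlt; apply/orP; left; apply/eqP.
apply: eq_bigr => u _.
rewrite /pr PA; last exact: measurable_Bt.
by rewrite pbE -(fineK Qfin) -EFinM.
Qed.

Lemma mD_E D : (mD D)%:E = \sum_(0 <= i < D) pbar i.
Proof.
rewrite /mD -sumEFin /index_iota subn0; apply: eq_bigr => i _.
by rewrite fineK ?pbar_fin.
Qed.

Lemma mD_cvg : mD @ \oo --> mR.
Proof.
have H : (fun D => (mD D)%:E) @ \oo --> mR%:E.
  rewrite -sum_pbar_fin (_ : (fun D => _) = (fun D => \sum_(0 <= i < D) pbar i)); last first.
    by apply/funext => D; rewrite mD_E.
  by apply: is_cvg_nneseries => i _ _; exact: pbar_ge0.
exact: (fine_cvg H).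
Qed.

Lemma mD_le D : (mD D <= mR)%R.
Proof.
rewrite -lee_fin mD_E -sum_pbar_fin; apply: nneseries_lim_ge => i _ _; exact: pbar_ge0.
Qed.

Lemma mD_ge0 D : (0 <= mD D)%R.
Proof. by apply: sumr_ge0 => i _; apply/fine_ge0/pbar_ge0. Qed.

Definition cc : R := (1 - mR)^-1.
Definition sD (D : nat) : R := \sum_(k < D) mD D ^+ k.

Lemma sD_cvg : sD @ \oo --> cc.
Proof.
have ltm D : (mD D < 1)%R by apply: le_lt_trans (mD_le D) mR_lt1.
have E D : sD D = ((1 - mD D ^+ D) * (1 - mD D)^-1)%R.
  have ne : (1 - mD D != 0)%R by rewrite subr_eq0 eq_sym lt_eqF.
  have H := subrX1 (mD D) D.
  rewrite /sD (_ : (1 - mD D ^+ D = (1 - mD D) * \sum_(i < D) mD D ^+ i)%R).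
    by rewrite mulrAC divff // mul1r.
  by rewrite -opprB H -mulNr opprB.
rewrite (_ : sD = (fun D => (1 - mD D ^+ D) * (1 - mD D)^-1)%R); last exact/funext.
rewrite /cc -[X in _ --> X]mul1r; apply: cvgM.
  rewrite -[X in _ --> X]subr0; apply: cvgB; first exact: cvg_cst.
  apply: (@squeeze_cvgr _ _ _ _ (fun _ => 0%R) (fun D => mR ^+ D)%R).
  - by near=> D; rewrite exprn_ge0 ?mD_ge0 //= lerXn2r // ?nnegrE ?mD_ge0 ?mR_ge0 ?mD_le.
  - exact: cvg_cst.
  - by apply: cvg_expr; rewrite ger0_norm ?mR_ge0 ?mR_lt1.
apply: cvgV; first by rewrite subr_eq0 eq_sym lt_eqF ?mR_lt1.
by apply: cvgB; [exact: cvg_cst|exact: mD_cvg].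
Unshelve. all: end_near.
Qed.

Lemma cc_ge1 : (1 <= cc)%R.
Proof.
rewrite /cc invf_ge1 ?subr_gt0 ?mR_lt1 //.
by rewrite lerBlDr lerDl mR_ge0.
Qed.

Lemma upperR t : (pr (Hset t) <= cc * fine (Q (Bt t)))%R.
Proof.
set q := fine (Q (Bt t)).
have H := upper t; rewrite -/q in H.
have E : \sum_(n <oo) ((q * mR ^+ n)%:E) = (cc * q)%:E.
  rewrite (_ : (fun n => _) = EFin \o series (geometric q mR)); last first.
    by apply/funext => n; rewrite /series /= sumEFin.
  rewrite EFin_lim; last first.
    by apply: is_cvg_geometric_series; rewrite ger0_norm ?mR_ge0 ?mR_lt1.
  congr EFin; apply: cvg_lim => //.
  rewrite /cc mulrC; apply: cvg_geometric_series.
  by rewrite ger0_norm ?mR_ge0 ?mR_lt1.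
rewrite E in H; rewrite /pr -[X in (_ <= X)%R]/(fine ((cc * q)%R)%:E).
by rewrite fine_le ?Pfin //; exact: measurable_Hset.
Qed.

End Cluster.

Theorem mainTheorem6 (R : realType)
  (dS : measure_display) (S : measurableType dS) (Q : probability S R)
  (f : S -> R) (nu : R) (h : R * S -> R)
  (d : measure_display) (T : measurableType d) (P : probability T R)
  (M : seq nat -> T -> S) (N : seq nat -> T -> nat) (G : R -> R) :
  measurable_fun setT f -> (forall a, 0 <= f a) ->
  0 < nu ->
  measurable_fun setT h -> (forall p, 0 <= h p) ->
  (\int[Q]_a kappa h a < 1)%E ->
  (forall u, measurable_fun setT (M u)) ->
  (forall u k, measurable [set w | N u w = k]) ->
  iid_cluster_family P Q h M N ->
  is_EVD G ->
  in_MDA Q (fun a => (f a)%:E) G ->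
  in_MDA P (cluster_max f M N) G.
Proof.
move=> mf f0 nu0 mh h0 k1 mM mN iid evd [a [b [a0 HQ]]].
have c1 := cc_ge1 Q h P M N mM mN iid mh h0 k1.
have c0 : 0 < cc Q h by apply: lt_le_trans c1.
have [al [be [al0 Hab]]] := evd_scale _ _ evd c0.
exists (fun n => a n * al), (fun n => b n + a n * be); split.
  by move=> n; rewrite mulr_gt0.
move=> x Ex; have [Ey Hc] := Hab x Ex.
set y := al * x + be in Ey Hc.
have HQy := HQ y Ey.
rewrite -Hc.
have eqt n : a n * al * x + (b n + a n * be) = a n * y + b n by rewrite /y; ring.
rewrite (_ : (fun n => _) = (fun n => n%:R * pr P (Hset M N f (a n * y + b n)))); last first.
  by apply/funext => n; rewrite eqt.
apply: (@squeeze_main R (fun n => fine (Q (Bt f (a n * y + b n))))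
  (fun n => pr P (Hset M N f (a n * y + b n))) (sD Q h)
  (fun D => (size (labs D D))%:R ^+ 2)).
- by move=> n; apply/fine_ge0/measure_ge0.
- by move=> n; exact: (upperR Q h P M N mM mN iid mh h0 k1 f mf).
- by move=> D n; rewrite mulrC; exact: (lower Q h P M N mM mN iid mh h0 f mf).
- exact: (sD_cvg Q h P M N mM mN iid mh h0 k1).
- exact: HQy.
Qed.
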